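(* Let $\mathcal{C}\subseteq\mathbb{F}_q^n$ be a linear code of length $n$, dimension $k\ge1$ and minimum distance $d\ge2$, and let $J=n-k-d+2$. Then the average locality of $\mathcal{C}$ satisfies $$\overline{r}\ \ge\ \Big\lceil\frac{k}{J}\Big\rceil\left(1-\frac{J\lceil\frac{k}{J}\rceil-k}{n}\right).$$ Equivalently, $\overline{r}\ge \alpha\lceil k/J\rceil+(1-\alpha)\lfloor k/J\rfloor$ with $\alpha=\frac1n\big(J\lceil k/J\rceil-k\big)\big(\lfloor k/J\rfloor+1\big)$.
   Context: For a codeword $\mathbf{y}=(y_1,\dots,y_n)\in\mathcal{C}$, the locality $\mathrm{Loc}(y_i)$ of the $i$-th symbol is the smallest size of a set $\mathcal{I}\subseteq[1,n]\setminus\{i\}$ such that there are scalars $\alpha_l\in\mathbb{F}_q$ with $y_i=\sum_{l\in\mathcal{I}}\alpha_l y_l$ for every codeword $\mathbf{y}\in\mathcal{C}$. The average locality is $\overline{r}=\frac1n\sum_{i=1}^n\mathrm{Loc}(y_i)$. Note $J\ge1$ by the Singleton bound $d\le n-k+1$. *)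

(* Defs.v *)
From HB Require Import structures.
From mathcomp Require Import all_boot all_order all_algebra.
Set Implicit Arguments. Unset Strict Implicit. Unset Printing Implicit Defensive.
Import Order.TTheory GRing.Theory Num.Theory.

(* A linear code of length n over the finite field F is a subspace
   C : {vspace 'rV[F]_n}; codewords are row vectors y, with i-th symbol y ord0 i. *)

Definition wt (F : finFieldType) (n : nat) (y : 'rV[F]_n) : nat :=
  #|[set i : 'I_n | y ord0 i != 0%R]|.

Definition mindist (F : finFieldType) (n : nat) (C : {vspace 'rV[F]_n}) : nat :=
  \big[minn/n]_(y : 'rV[F]_n | (y \in C) && (y != 0%R)) wt y.

Definition repair_set (F : finFieldType) (n : nat) (C : {vspace 'rV[F]_n})
    (i : 'I_n) (I : {set 'I_n}) : bool :=
  (i \notin I) &&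
  [exists alpha : {ffun 'I_n -> F},
     [forall y : 'rV[F]_n, (y \in C) ==>
        (y ord0 i == \sum_(l in I) alpha l * y ord0 l)%R]].

(* Locality of the i-th symbol: the smallest size of a repair set
   (default n if none exists; when d >= 2 one always exists). *)
Definition Loc (F : finFieldType) (n : nat) (C : {vspace 'rV[F]_n}) (i : 'I_n) : nat :=
  \big[minn/n]_(I : {set 'I_n} | repair_set C i I) #|I|.

Definition avg_locality (F : finFieldType) (n : nat) (C : {vspace 'rV[F]_n}) : rat :=
  ((\sum_(i < n) Loc C i)%:R / n%:R)%R.

Definition ceildiv (a b : nat) : nat := (a + b.-1) %/ b.

(* Main.v *)
From Stdlib Require Import ZArith Lia.
Require Import Defs.
From HB Require Import structures.
From mathcomp Require Import all_boot all_order all_algebra.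
From mathcomp Require Import zify ring.
Import Order.TTheory GRing.Theory Num.Theory.

Module Ar.
Open Scope Z_scope.
Lemma zstep (r r' x t : Z) : 1 <= t -> 0 <= r' <= r -> 0 <= x ->
  t*(r'+1+x) + t*r' <= r*(r'+1+x) + t*t*(1+x).
Proof.
intros.
assert (h1 : 0 <= (r - r') * (2*t - r) \/ 2*t <= r) by (destruct (Z_le_gt_dec (2*t) r); [right|left; apply Z.mul_nonneg_nonneg]; lia).
assert (h2 : 0 <= (r-t)*(r-t+1)) by (destruct (Z_le_gt_dec t r); [apply Z.mul_nonneg_nonneg|apply Z.mul_nonpos_nonpos]; lia).
assert (h3 : 0 <= x*(r - t + t*t)) by (apply Z.mul_nonneg_nonneg; nia).
assert (h4 : 0 <= r' * (r - 2*t) \/ r < 2*t) by (destruct (Z_le_gt_dec (2*t) r); [left; apply Z.mul_nonneg_nonneg|right]; lia).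
assert (h5 : 0 <= r - t + t * t) by nia.
destruct h1; destruct h4; nia.
Qed.
Close Scope Z_scope.
End Ar.
Import Ar.

Lemma arith_step (r r' D t : nat) : (1 <= t -> r' <= r -> r' + 1 <= D ->
  t*D + t*r' <= r*D + t*t*(D - r'))%N.
Proof.
move=> t1 rr Dr.
have [x ->] : exists x, D = (r' + 1 + x)%N by exists (D - r' - 1)%N; lia.
have -> : (r' + 1 + x - r' = 1 + x)%N by lia.
have := zstep (Z.of_nat r) (Z.of_nat r') (Z.of_nat x) (Z.of_nat t).
lia.
Qed.
Lemma arith_term (r e N B t : nat) : (1 <= t -> t <= r -> e <= r -> e + 1 <= N -> 1 <= B ->
  t*N + t*e <= r*N + t*t*B)%N.
Proof.
move=> t1 tr er eN B1.
have h0 : (t * t <= t * t * B)%N by rewrite -{1}(muln1 (t*t)) leq_mul2l B1 orbT.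
have h4 : ((N - e - 1) * t <= (N - e - 1) * r)%N by apply: leq_mul.
have [x ->] : exists x, N = (e + 1 + x)%N by exists (N - e - 1)%N; lia.
have h5 : (x * t <= x * r)%N by apply: leq_mul.
have := zstep (Z.of_nat r) (Z.of_nat e) Z0 (Z.of_nat t).
lia.
Qed.

HB.instance Definition _ := SemiGroup.isComLaw.Build nat minn minnA minnC.

Section Loc.
Variables (F : finFieldType) (n : nat) (C : {vspace 'rV[F]_n}).

Definition chi (S : {set 'I_n}) : 'rV[F]_n := \row_j (if j \in S then 1 else 0)%R.
Definition V (S : {set 'I_n}) : {vspace 'rV[F]_n} :=
  (C :&: lker (linfun (mulmxr (diag_mx (chi S)))))%VS.

Lemma memV S y : (y \in V S) = (y \in C) && [forall j in S, y ord0 j == 0%R].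
Proof.
rewrite memv_cap memv_ker lfunE /= mul_mx_diag; congr (_ && _).
apply/eqP/forall_inP => [H j jS | H].
  have := congr1 (fun M : 'rV[F]_n => M ord0 j) H.
  by rewrite !mxE jS mulr1 => ->.
apply/matrixP => i j; rewrite (ord1 i) !mxE.
by case: ifP => [/H/eqP ->|_]; rewrite ?mulr0 ?mul0r.
Qed.

Lemma V0 : V set0 = C.
Proof.
apply/vspaceP => y; rewrite memV.
case: (y \in C) => //=; apply/forall_inP => j; by rewrite inE.
Qed.

Lemma VT : V setT = 0%VS.
Proof.
apply/vspaceP => y; rewrite memV memv0.
apply/idP/idP => [/andP[_ /forall_inP H]|/eqP->].
  apply/eqP/matrixP => i j; rewrite (ord1 i) mxE; apply/eqP/H; by rewrite inE.
by rewrite mem0v /=; apply/forall_inP => j _; rewrite mxE.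
Qed.

Lemma V_sub S : (V S <= C)%VS.
Proof. exact: capvSl. Qed.

Lemma dimV_add1 S m : (\dim (V S) <= \dim (V (m |: S)) + 1)%N.
Proof.
pose g := linfun (mulmxr (delta_mx m (0%R : 'I_1)) : 'rV[F]_n -> 'M[F]_(1,1)).
have -> : V (m |: S) = (V S :&: lker g)%VS.
  apply/vspaceP => y; rewrite memv_cap memv_ker lfunE /= !memV.
  rewrite -andbA; congr (_ && _).
  have E : forall i j, (y *m delta_mx m (0%R : 'I_1))%R i j = y ord0 m.
    move=> i j; rewrite (ord1 i) (ord1 j) !mxE (bigD1 m) //= mxE !eqxx mulr1 big1 ?addr0 //.
    by move=> i0 /negbTE ne; rewrite mxE ne mulr0.
  have -> : ((y *m delta_mx m (0%R : 'I_1)) == 0)%R = (y ord0 m == 0)%R.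
    apply/eqP/eqP => [H|H].
      by rewrite -(E 0%R 0%R) H mxE.
    by apply/matrixP => i j; rewrite E H mxE.
  apply/idP/idP.
    move/forall_inP=> H; rewrite H ?inE ?eqxx // andbT.
    by apply/forall_inP=> j jS; apply: H; rewrite inE jS orbT.
  case/andP => /forall_inP H2 H1; apply/forall_inP => j.
  by rewrite !inE => /orP[/eqP->//|]; exact: H2.
rewrite -(limg_ker_dim g (V S)) leq_add2l.
apply: leq_trans (dimvS (subvf _)) _; by rewrite dimvf /dim /=.
Qed.


Lemma dimV_addA A S : (\dim (V S) <= \dim (V (S :|: A)) + #|A|)%N.
Proof.
elim: {A}#|A| {-2}A (eqxx #|A|) S => [|c IH] A /eqP cA S.
  by move: cA => /eqP; rewrite cards_eq0 => /eqP ->; rewrite setU0 cards0 addn0.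
have [m mA] : exists m, m \in A.
  by apply/set0Pn; rewrite -card_gt0 cA.
have cA' : #|A :\ m| == c.
  by apply/eqP; have := cardsD1 m A; rewrite mA cA; lia.
have -> : S :|: A = (m |: S) :|: (A :\ m).
  apply/setP => x; rewrite !inE; case: eqP => [->|] //=; by rewrite mA orbT.
apply: leq_trans (dimV_add1 S m) _.
have := IH _ cA' (m |: S); rewrite cA; lia.
Qed.

Lemma dimV_C S : (\dim (V S) <= \dim C)%N.
Proof. exact: dimvS (V_sub S). Qed.

Lemma dimV_k S : (\dim C <= \dim (V S) + #|S|)%N.
Proof. by have := dimV_addA S set0; rewrite V0 set0U. Qed.

Lemma mindist_le {S y} : y \in V S -> y != 0%R -> (mindist C + #|S| <= n)%N.
Proof.
rewrite memV => /andP[yC /forall_inP yS] y0.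
have h1 : (mindist C <= wt y)%N.
  by rewrite /mindist (bigD1 y) /= ?yC ?y0 //; apply: geq_minl.
have h2 : (wt y <= #|~: S|)%N.
  apply: subset_leq_card; apply/subsetP => i; rewrite !inE; apply: contra => iS.
  by apply/eqP; apply/eqP; apply: yS.
have := cardsC S; rewrite card_ord; lia.
Qed.

Lemma singleton S : (1 <= \dim (V S))%N -> (#|S| + \dim (V S) + mindist C <= n + 1)%N.
Proof.
elim: {S}(n - #|S|)%N {-2}S (leqnn (n - #|S|)) => [|c IH] S cS dS.
- have ST : S = setT.
    apply/eqP; rewrite eqEcard subsetT cardsT card_ord; lia.
  by move: dS; rewrite ST VT dimv0.
- case: (ltngtP (\dim (V S)) 1) => [|d2|d1]; first lia.
  + case: (pickP (fun m => m \notin S)) => [m mS | H].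
      have h1 := dimV_add1 S m.
      have h2 := IH (m |: S).
      rewrite cardsU1 mS /= in h2.
      have e1 : (n - (1 + #|S|) <= c)%N by lia.
      have e2 : (0 < \dim (V (m |: S)))%N by lia.
      have := h2 e1 e2; move: h1; set s := #|S|; lia.
    have ST : S = setT.
      apply/setP => m; rewrite inE; by move: (H m) => /negbFE.
    by move: d2; rewrite ST VT dimv0.
  + have y0 : vpick (V S) != 0%R by rewrite vpick0 -dimv_eq0 d1.
    have := mindist_le (memv_pick (V S)) y0; rewrite d1; set s := #|S|; have := max_card S; rewrite card_ord; lia.
Qed.

Lemma repairP l I : repair_set C l I -> (l \notin I) /\
  forall y, y \in C -> (forall m, m \in I -> y ord0 m = 0%R) -> y ord0 l = 0%R.
Proof.
case/andP => lI /existsP[alpha /forallP H]; split=> // y yC yI.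
move: (H y); rewrite yC /= => /eqP ->; apply: big1 => m mI; by rewrite yI ?mulr0.
Qed.

Lemma Loc_le l I : repair_set C l I -> (Loc C l <= #|I|)%N.
Proof. by move=> HI; rewrite /Loc (bigD1 I) //=; apply: geq_minl. Qed.

Lemma Loc_spec l : Loc C l = n \/ exists2 I, repair_set C l I & #|I| = Loc C l.
Proof.
case: (pickP (repair_set C l)) => [I0 HI0 | none]; last first.
  by left; rewrite /Loc big_pred0.
right; case: (@arg_minnP _ I0 (repair_set C l) (fun I : {set 'I_n} => #|I|) HI0) => I HI Hmin.
exists I => //; apply/eqP; rewrite eqn_leq Loc_le // andbT /Loc.
apply: (big_ind (fun x => #|I| <= x)%N) => //.
- by have := max_card I; rewrite card_ord.
- by move=> x y hx hy; rewrite leq_min hx hy.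
Qed.


Lemma sum_ge (X : {set 'I_n}) r : (forall m, m \in X -> r <= Loc C m)%N ->
  (r * #|X| <= \sum_(m in X) Loc C m)%N.
Proof. by move=> H; rewrite mulnC -sum_nat_const; apply: leq_sum. Qed.

Lemma cardUD (S I : {set 'I_n}) : #|S :|: I| = (#|S| + #|I :\: S|)%N.
Proof.
rewrite cardsU cardsD setIC.
have := subset_leq_card (subsetIl I S); set a := #|I :&: S|; set b := #|S|; set c := #|I|; lia.
Qed.

Variables (t : nat) (t1 : (1 <= t)%N) (k1 : (1 <= \dim C)%N) (d2 : (2 <= mindist C)%N).
Hypothesis tmin : forall r, (\dim C <= (n.+2 - (\dim C + mindist C)) * r)%N -> (t <= r)%N.

Definition JJ := (n.+2 - (\dim C + mindist C))%N.
Definition B (S : {set 'I_n}) := (JJ + \dim C - #|S| - \dim (V S))%N.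

Lemma kd : (\dim C + mindist C <= n + 1)%N.
Proof. have := singleton set0; rewrite V0 cards0 add0n; apply; exact: k1. Qed.

Lemma term_case S r : (1 <= \dim (V S))%N ->
  (forall m, m \notin S -> r <= Loc C m)%N ->
  (\dim C - \dim (V S) <= (JJ - B S) * r)%N -> (\dim (V S) <= r)%N ->
  (t*(n - #|S|) + t*\dim (V S) <= \sum_(l in ~: S) Loc C l + t*t*B S)%N.
Proof.
move=> e1 Hr Hinv er.
have sg := singleton S e1.
have kk := kd.
have hk := dimV_k S.
have hs := sum_ge (~: S) r (fun m mS => Hr m ltac:(by rewrite inE in mS)).
have cS := cardsC S; rewrite card_ord in cS.
move: Hinv hs sg hk cS; rewrite /B /JJ.
set e := \dim (V S); set s := #|S|; set k := \dim C; set d := mindist C.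
set sm := \sum_(_ in _) _; set c := #|~: S|.
move=> Hinv hs sg hk cS.
have Bge : (1 <= n.+2 - (k + d) + k - s - e)%N by lia.
have Jr : (k <= (n.+2 - (k + d)) * r)%N.
  have : ((n.+2 - (k + d) - (n.+2 - (k + d) + k - s - e) + 1) * r <= (n.+2 - (k + d)) * r)%N.
    by apply: leq_mul => //; lia.
  rewrite mulnDl mul1n; lia.
have tr := tmin r Jr.
have cc : (n - s = c)%N by lia.
have := arith_term r e c (n.+2 - (k + d) + k - s - e) t t1 tr er ltac:(lia) Bge.
rewrite cc [(r * c)%N]mulnC; lia.
Qed.


Lemma V_mono (S S' : {set 'I_n}) : S \subset S' -> (\dim (V S') <= \dim (V S))%N.
Proof.
move=> SS'; apply: dimvS; apply/subvP => y; rewrite !memV => /andP[yC /forall_inP H].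
by rewrite yC; apply/forall_inP => j jS; apply: H; exact: (subsetP SS' j jS).
Qed.

Lemma setUDx (S I : {set 'I_n}) : S :|: (I :\: S) = S :|: I.
Proof. by apply/setP => x; rewrite !inE; case: (x \in S); case: (x \in I). Qed.

Lemma main_ind c (S : {set 'I_n}) : (n - #|S| <= c)%N -> (1 <= \dim (V S))%N ->
  (forall l, l \notin S -> \dim C - \dim (V S) <= (JJ - B S) * Loc C l)%N ->
  (t*(n - #|S|) + t*\dim (V S) <= \sum_(l in ~: S) Loc C l + t*t*B S)%N.
Proof.
elim: c S => [|c IH] S cS eS Hinv.
  have ST : S = setT.
    apply/eqP; rewrite eqEcard subsetT cardsT card_ord; lia.
  by move: eS; rewrite ST VT dimv0.
case: (pickP (fun m => m \notin S)) => [l0 l0S | H]; last first.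
  have ST : S = setT.
    by apply/setP => m; rewrite inE; move: (H m) => /negbFE.
  by move: eS; rewrite ST VT dimv0.
case: (@arg_minnP _ l0 (fun m => m \notin S) (Loc C) l0S) => l lS Hmin.
have Hr : forall m, m \notin S -> (Loc C l <= Loc C m)%N := Hmin.
have sg := singleton S eS.
case: (Loc_spec l) => [Ln | [I HI cI]].
  apply: (@term_case S (Loc C l) eS Hr (Hinv l lS)).
  rewrite Ln; move: sg; set e := \dim (V S); lia.
have [lI Hrep] := repairP l I HI.
set S' := l |: (S :|: I).
have VS' : V S' = V (S :|: I).
  apply/vspaceP => y; rewrite !memV; case yC: (y \in C) => //=.
  apply/forall_inP/forall_inP => [H m mSI | H m].
    by apply: H; rewrite in_setU1 mSI orbT.
  rewrite in_setU1 => /orP[/eqP->|mSI]; last exact: H.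
  apply/eqP; apply: (Hrep y yC) => m2 mI; apply/eqP; apply: H; by rewrite inE mI orbT.
have hA := dimV_addA (I :\: S) S; rewrite setUDx -VS' in hA.
have cA : (#|I :\: S| <= #|I|)%N := subset_leq_card (subsetDl I S).
have cS' : #|S'| = (#|S| + #|I :\: S| + 1)%N.
  rewrite /S' cardsU1 cardUD.
  have -> : l \notin S :|: I by rewrite inE negb_or lS lI.
  by rewrite addnC.
have SS' : S \subset S'.
  by apply/subsetP => x xS; rewrite in_setU1 inE xS orbT.
case: (posnP (\dim (V S'))) => [e0 | e'1].
  apply: (@term_case S (Loc C l) eS Hr (Hinv l lS)).
  move: hA cA; rewrite e0 cI; set a := #|I :\: S|; lia.
have cS'' : (n - #|S'| <= c)%N.
  move: cS; rewrite cS'; set a := #|I :\: S|; set s := #|S|; lia.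
have Hinv' : forall m, m \notin S' -> (\dim C - \dim (V S') <= (JJ - B S') * Loc C m)%N.
  move=> m mS'.
  have mS : m \notin S by apply: contra mS'; apply: (subsetP SS').
  have h1 := Hinv m mS.
  have h2 := Hr m mS.
  have sg' := singleton S' e'1.
  have hk := dimV_k S.
  have hm : ((JJ - B S + 1) * Loc C m <= (JJ - B S') * Loc C m)%N.
    apply: leq_mul => //.
    move: sg sg' hk hA cA; rewrite /B /JJ cS' cI.
    set e := \dim (V S); set e' := \dim (V S'); set a := #|I :\: S|; set s := #|S|.
    set k := \dim C; set d := mindist C; lia.
  rewrite mulnDl mul1n in hm.
  move: h1 h2 hm hA cA; rewrite cI.
  set e := \dim (V S); set e' := \dim (V S'); set a := #|I :\: S|.
  set x := ((JJ - B S) * _)%N; set y := ((JJ - B S') * _)%N.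
  lia.
have IH' := IH S' cS'' e'1 Hinv'.
rewrite (big_setID (~: S')).
have -> : ~: S :&: ~: S' = ~: S'.
  by apply/setIidPr; rewrite setCS.
have hs := sum_ge (~: S :\: ~: S') (Loc C l) (fun m mX => Hr m ltac:(by move: mX; rewrite !inE => /andP[_])).
have cX : #|~: S :\: ~: S'| = (#|S'| - #|S|)%N.
  rewrite cardsD.
  have -> : ~: S :&: ~: S' = ~: S' by apply/setIidPr; rewrite setCS.
  have h1 := cardsC S; have h2 := cardsC S'.
  move: h1 h2; rewrite !card_ord; set s := #|S|; set s' := #|S'|.
  have := subset_leq_card SS'; rewrite -/s -/s'. lia.
rewrite cX in hs.
have sg' := singleton S' e'1.
have hk := dimV_k S.
have ast := arith_step (Loc C l) (\dim (V S) - \dim (V S')) (#|S'| - #|S|) t t1.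
have e_le : (\dim (V S) - \dim (V S') <= Loc C l)%N.
  move: hA cA; rewrite cI; set e := \dim (V S); set e' := \dim (V S'); set a := #|I :\: S|; lia.
have D_ge : (\dim (V S) - \dim (V S') + 1 <= #|S'| - #|S|)%N.
  move: hA; rewrite cS'; set e := \dim (V S); set e' := \dim (V S'); set a := #|I :\: S|; set s := #|S|; lia.
have {ast} ast := ast e_le D_ge.
have mono := V_mono S S' SS'.
have kk := kd.
have bB : (B S = B S' + ((#|S'| - #|S|) - (\dim (V S) - \dim (V S'))))%N.
  move: sg sg' hk hA mono kk; rewrite /B /JJ cS'.
  set e := \dim (V S); set e' := \dim (V S'); set a := #|I :\: S|; set s := #|S|.
  set k := \dim C; set d := mindist C; lia.
have E1 : (t * (n - #|S|) = t * (n - #|S'|) + t * (#|S'| - #|S|))%N.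
  rewrite -mulnDr; congr (t * _)%N.
  move: sg'; rewrite cS'; set a := #|I :\: S|; set s := #|S|; set e' := \dim (V S'); lia.
have E2 : (t * \dim (V S) = t * \dim (V S') + t * (\dim (V S) - \dim (V S')))%N.
  rewrite -mulnDr; congr (t * _)%N.
  move: mono; set e := \dim (V S); set e' := \dim (V S'); lia.
rewrite E1 E2 bB mulnDr /=.
move: IH' hs ast.
set D := (#|S'| - #|S|)%N; set r' := (\dim (V S) - \dim (V S'))%N.
set P1 := (t * (n - #|S'|))%N; set P2 := (t * \dim (V S'))%N.
set Q1 := \sum_(i in ~: S') Loc C i; set Q2 := \sum_(i in _ :\: _) Loc C i.
set R1 := (t * t * B S')%N.
lia.
Qed.

End Loc.

Local Open Scope ring_scope.

Theorem theorem1 (F : finFieldType) (n : nat) (C : {vspace 'rV[F]_n}) :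
  (1 <= \dim C)%N -> (2 <= mindist C)%N ->
  let k := \dim C in
  let d := mindist C in
  let J := (n.+2 - (k + d))%N in
  (ceildiv k J)%:R * (1 - ((J * ceildiv k J - k)%N)%:R / n%:R) <= avg_locality C.
Proof.
move=> k1 d2; cbv zeta.
set k := \dim C; set d := mindist C; set J := (n.+2 - (k + d))%N.
have kk : (k + d <= n + 1)%N by apply: kd.
have J1 : (1 <= J)%N by rewrite /J /k /d; lia.
set t := ceildiv k J.
have dq := divn_eq (k + J.-1) J.
have mq := ltn_pmod (k + J.-1) J1.
have kt : (k <= J * t)%N.
  move: dq mq; rewrite /t /ceildiv; set q := ((k + J.-1) %/ J)%N; set m := ((k + J.-1) %% J)%N.
  rewrite [(J * q)%N]mulnC; lia.
have t1 : (1 <= t)%N.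
  move: dq mq; rewrite /t /ceildiv; set q := ((k + J.-1) %/ J)%N; set m := ((k + J.-1) %% J)%N.
  case: q => [|q] //; rewrite mul0n add0n; lia.
have tmin : forall r, (\dim C <= (n.+2 - (\dim C + mindist C)) * r)%N -> (t <= r)%N.
  move=> r hr; rewrite /t /ceildiv -ltnS ltn_divLR; last by [].
  rewrite -/k -/d -/J in hr; rewrite mulSn; lia.
have H := @main_ind F n C t t1 k1 d2 tmin n set0 ltac:(by rewrite cards0 subn0) ltac:(by rewrite V0).
rewrite V0 cards0 subn0 /B V0 cards0 subn0 addnK in H.
have {H} H := H (fun l _ => ltac:(by rewrite subnn)).
rewrite setC0 in H.
have E : (\sum_(l in [set: 'I_n]) Loc C l = \sum_(i < n) Loc C i)%N.
  by apply: eq_bigl => i; rewrite in_setT.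
rewrite E in H; change (JJ F n C) with J in H.
have n0 : (0 < n)%N by rewrite /k /d in kk k1 d2 *; lia.
have sn : (J * t - k <= n)%N.
  move: dq mq kk; rewrite /t /ceildiv; set q := ((k + J.-1) %/ J)%N; set m := ((k + J.-1) %% J)%N.
  rewrite [(J * q)%N]mulnC /J; lia.
have key : (t * (n - (J * t - k)) <= \sum_(i < n) Loc C i)%N.
  rewrite mulnBr mulnBr.
  have ->: (t * (J * t) = t * t * J)%N by rewrite mulnCA mulnC.
  move: H; set X := (t * t * J)%N; set Y := \sum_(i < n) _; set Z := (t * n)%N; set W := (t * \dim C)%N.
  lia.
rewrite /avg_locality.
have eqL : t%:R * (1 - (J * t - k)%:R / n%:R) = (t * (n - (J * t - k)))%:R / n%:R :> rat.
  have nz : (n%:R : rat) != 0 by rewrite pnatr_eq0 -lt0n.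
  rewrite natrM (natrB _ sn); field.
  exact: nz.
rewrite eqL ler_pM2r ?invr_gt0 ?ltr0n // ler_nat.
exact: key.
Qed.
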